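(* Let $N,n,m,p$ be positive integers, $A\in\mathbb{R}^{n\times n}$, $B\in\mathbb{R}^{n\times p}$, $C\in\mathbb{R}^{m\times n}$, $H\in\mathbb{R}^{n\times m}$, $W=[w_{ij}]\in\mathbb{R}^{N\times N}$ with $w_{ii}=0$ for all $i$, $\Delta=\mathrm{diag}(\delta_1,\dots,\delta_N)$ with $\delta_i\in\{0,1\}$, and $h>0$. Put $\mathcal{B}(h)=\int_0^h e^{A\tau}d\tau\,B$, $\mathcal{H}(h)=\int_0^h e^{A\tau}d\tau\,HC$, $\Phi_s=I_N\otimes e^{Ah}+W\otimes\mathcal{H}(h)$, $\Psi_s=\Delta\otimes\mathcal{B}(h)$. Assume $W$ is diagonalizable, and let $v_1,\dots,v_N\in\mathbb{C}^{1\times N}$ be linearly independent row vectors with $v_kW=\lambda_kv_k$ ($\lambda_1,\dots,\lambda_N$ the eigenvalues of $W$ listed with multiplicity). For $k=1,\dots,N$ let $E_k=e^{Ah}+\lambda_k\mathcal{H}(h)$. Suppose that: (1) the pair $(W,\Delta)$ is controllable; (2) the pair $(E_k,\mathcal{B}(h))$ is controllable for every $k=1,\dots,N$; (3) whenever $\theta\in\mathbb{C}$ is a common eigenvalue of $E_{k_1},\dots,E_{k_q}$ for distinct indices $k_1,\dots,k_q\in\{1,\dots,N\}$ with $1<q\le N$, then $(v_{k_1}\otimes\xi_{k_1}+\dots+v_{k_q}\otimes\xi_{k_q})(\Delta\otimes\mathcal{B}(h))\neq0$ for all $\xi_j\in M(\theta\,|\,E_j)$, $j=k_1,\dots,k_q$,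 with $(\xi_{k_1},\dots,\xi_{k_q})\neq0$. Then the networked sampled-data system $X(k+1)=\Phi_sX(k)+\Psi_sU(k)$ is controllable.
   Context: The networked sampled-data system is the discrete-time system $X(k+1)=\Phi_sX(k)+\Psi_sU(k)$, $X(k)\in\mathbb{R}^{Nn}$, $U(k)\in\mathbb{R}^{Np}$; it is called controllable if every initial state can be steered to the origin in finitely many steps. For $F\in\mathbb{C}^{q\times q}$ and $G\in\mathbb{C}^{q\times s}$, the pair $(F,G)$ is called controllable if $\mathrm{rank}[sI_q-F,\ G]=q$ for every $s\in\mathbb{C}$. For a square matrix $E$ and $\theta\in\mathbb{C}$, $M(\theta\,|\,E)=\{\xi \text{ row vector}:\ \xi E=\theta\xi\}$ is the left eigenspace of $E$ for $\theta$ (including $0$). $\otimes$ is the Kronecker product. *)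

(* Defs.v *)
From HB Require Import structures.
From mathcomp Require Import all_boot all_order all_algebra.
From mathcomp Require Import all_classical all_reals all_analysis.
From mathcomp Require Import complex mxtens.
Set Implicit Arguments. Unset Strict Implicit. Unset Printing Implicit Defensive.
Import Order.TTheory GRing.Theory Num.Theory.
Import numFieldNormedType.Exports.
Local Open Scope ring_scope.

Definition expm (R : realType) (n : nat) (A : 'M[R]_n) (t : R) : 'M[R]_n :=
  limn (series (fun k : nat => (t ^+ k / (k`!)%:R) *: A ^+ k)).

Definition int_expm (R : realType) (n : nat) (A : 'M[R]_n) (h : R) : 'M[R]_n :=
  \matrix_(i, j) Rintegral lebesgue_measure `[0, h]%classic
                   (fun tau : R => expm A tau i j).

Definition cmx (R : rcfType) (m n : nat) (M : 'M[R]_(m, n)) : 'M[R[i]]_(m, n) :=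
  map_mx (fun x : R => (x%:C)%C) M.

Definition ctrb_pair (K : fieldType) (q s : nat)
    (F : 'M[K]_q) (G : 'M[K]_(q, s)) : Prop :=
  forall z : K, \rank (row_mx (z%:M - F) G) = q.

Definition left_eigsp (K : fieldType) (q : nat) (theta : K) (E : 'M[K]_q)
    (xi : 'rV[K]_q) : Prop :=
  xi *m E = theta *: xi.

Fixpoint traj (R : pzRingType) (d r : nat) (Phi : 'M[R]_d) (Psi : 'M[R]_(d, r))
    (X0 : 'cV[R]_d) (U : nat -> 'cV[R]_r) (k : nat) : 'cV[R]_d :=
  match k with
  | 0 => X0
  | k'.+1 => Phi *m traj Phi Psi X0 U k' + Psi *m U k'
  end.

Definition ctrb_system (R : pzRingType) (d r : nat)
    (Phi : 'M[R]_d) (Psi : 'M[R]_(d, r)) : Prop :=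
  forall X0 : 'cV[R]_d, exists (K : nat) (U : nat -> 'cV[R]_r),
    traj Phi Psi X0 U K = 0.

Definition diag01 (R : pzRingType) (N : nat) (delta : 'I_N -> bool) : 'M[R]_N :=
  diag_mx (\row_i (delta i)%:R).

(* Main.v *)
Require Import Defs.
From HB Require Import structures.
From mathcomp Require Import all_boot all_order all_algebra.
From mathcomp Require Import all_classical all_reals all_analysis.
From mathcomp Require Import complex mxtens.
From mathcomp Require Import zify.
Set Implicit Arguments. Unset Strict Implicit. Unset Printing Implicit Defensive.
Import Order.TTheory GRing.Theory Num.Theory.
Local Open Scope ring_scope.

Section Gen.
Variable F : fieldType.

Lemma pbh_easy q s (Fm : 'M[F]_q) (G : 'M[F]_(q,s)) : ctrb_pair Fm G ->
  forall a (x : 'rV_q), x *m Fm = a *: x -> x *m G = 0 -> x = 0.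
Proof.
move=> H a x Hx HG.
have Hf : row_free (row_mx (a%:M - Fm) G) by rewrite /row_free H.
have := mulmx_free_eq0 x Hf.
rewrite mul_mx_row mulmxBr mul_mx_scalar Hx subrr HG row_mx0 eqxx.
by move/esym/eqP.
Qed.

Lemma tensmxDr m n p q (A : 'M[F]_(m,n)) (B C : 'M[F]_(p,q)) :
  A *t (B + C) = A *t B + A *t C.
Proof. by apply/matrixP=> i j; rewrite !mxE mulrDr. Qed.

Lemma tensmxZl m n p q c (A : 'M[F]_(m,n)) (B : 'M[F]_(p,q)) :
  (c *: A) *t B = c *: (A *t B).
Proof. by apply/matrixP=> i j; rewrite !mxE mulrA. Qed.

Lemma tensmxZr m n p q c (A : 'M[F]_(m,n)) (B : 'M[F]_(p,q)) :
  A *t (c *: B) = c *: (A *t B).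
Proof. by apply/matrixP=> i j; rewrite !mxE mulrCA. Qed.

Lemma tensmxBr m n p q (A : 'M[F]_(m,n)) (B C : 'M[F]_(p,q)) :
  A *t (B - C) = A *t B - A *t C.
Proof. by apply/matrixP=> i j; rewrite !mxE mulrBr. Qed.

Lemma tensmx_eq0 m n p q (A : 'M[F]_(m,n)) (B : 'M[F]_(p,q)) :
  A *t B = 0 -> A = 0 \/ B = 0.
Proof.
move=> H; case: (eqVneq A 0) => [->|nA]; first by left.
case: (eqVneq B 0) => [->|nB]; first by right.
exfalso.
have [i1 [j1 Ha]] : exists i j, A i j != 0.
  apply/not_existsP => Hn; move/eqP: nA; apply; apply/matrixP=> i j.
  rewrite mxE; case: (eqVneq (A i j) 0) => // Hc; exfalso; apply: (Hn i); exists j; exact: Hc.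
have [i2 [j2 Hb]] : exists i j, B i j != 0.
  apply/not_existsP => Hn; move/eqP: nB; apply; apply/matrixP=> i j.
  rewrite mxE; case: (eqVneq (B i j) 0) => // Hc; exfalso; apply: (Hn i); exists j; exact: Hc.
have := congr1 (fun M : 'M[F]_((m * p)%N, (n * q)%N) => M (mxtens_index (i1, i2)) (mxtens_index (j1, j2))) H.
rewrite /= tensmxE mxE => /eqP; rewrite mulf_eq0 (negbTE Ha) (negbTE Hb).
by [].
Qed.

Lemma tens_entry N n (eta : 'I_N -> 'rV[F]_n) (i : 'I_(1*1)) k j :
  (\sum_k (delta_mx 0 k : 'rV_N) *t eta k) i (mxtens_index (k, j)) = eta k 0 j.
Proof.
case: (mxtens_indexP i) => i0 i1; rewrite summxE.
under eq_bigr do rewrite tensmxE.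
rewrite (bigD1 k) //= big1 => [|k' nk].
  by rewrite !mxE [i0]ord1 [i1]ord1 !eqxx /= mul1r addr0.
by rewrite !mxE [k == k']eq_sym (negbTE nk) andbF mul0r.
Qed.

Lemma tens_inj N n (v : 'M[F]_N) (eta : 'I_N -> 'rV[F]_n) : v \in unitmx ->
  \sum_k (row k v *t eta k) = 0 -> forall k, eta k = 0.
Proof.
move=> Uv H k.
have H2 : \sum_k ((delta_mx 0 k : 'rV_N) *t eta k) = 0.
  have := congr1 (fun M : 'M[F]_((1*1)%N, (N*n)%N) => M *m (invmx v *t (1%:M : 'M[F]_n))) H.
  rewrite mul0mx mulmx_suml => E; rewrite -[RHS]E; apply: eq_bigr => k' _.
  by rewrite tensmx_mul rowE mulmxK // mulmx1.
apply/matrixP => i j; rewrite (ord1 i) mxE.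
by rewrite -(tens_entry eta (mxtens_index (ord0, ord0))) H2 mxE.
Qed.

End Gen.

Lemma eig_exists (F : closedFieldType) d r (P : 'M[F]_d.+1) (Q : 'M[F]_(d.+1, r))
  (y : 'rV[F]_d.+1) : y != 0 -> (forall k, y *m P ^+ k *m Q = 0) ->
  exists a (z : 'rV[F]_d.+1), [/\ z != 0, z *m P = a *: z & z *m Q = 0].
Proof.
move=> ny Hy.
have CH := Cayley_Hamilton P.
have [s Hs] := closed_field_poly_normal (char_poly P).
rewrite (monicP (char_poly_monic P)) scale1r in Hs.
rewrite Hs in CH.
suff: forall s (y : 'rV[F]_d.+1), y != 0 -> (forall k, y *m P ^+ k *m Q = 0) ->
  y *m horner_mx P (\prod_(z <- s) ('X - z%:P)) = 0 ->
  exists a (z : 'rV[F]_d.+1), [/\ z != 0, z *m P = a *: z & z *m Q = 0].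
  by move=> H; apply: (H s y ny Hy); rewrite CH mulmx0.
elim=> [|a s' IH] {}y {}ny {}Hy.
  by rewrite big_nil rmorph1 mulmx1 => /eqP; rewrite (negbTE ny).
rewrite big_cons rmorphM rmorphB /= horner_mx_X horner_mx_C -mulmxE mulmxA.
case: (eqVneq (y *m (P - a%:M)) 0) => [E _| nz].
  exists a, y; split => //.
    by move/eqP: E; rewrite mulmxBr mul_mx_scalar subr_eq0 => /eqP.
  by have := Hy 0%N; rewrite expr0 mulmx1.
apply: IH nz _ => k.
rewrite mulmxBr mul_mx_scalar !mulmxBl -scalemxAl -scalemxAl Hy scaler0 subr0.
by have := Hy k.+1; rewrite exprS -mulmxE !mulmxA.
Qed.

Lemma mxexpS (R : pzRingType) d (P : 'M[R]_d) k : P *m P ^+ k = P ^+ k.+1.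
Proof. by rewrite exprS. Qed.

Lemma traj_closed (R : comPzRingType) d r (Phi : 'M[R]_d) (Psi : 'M[R]_(d, r)) X0 U K :
  traj Phi Psi X0 U K =
  Phi ^+ K *m X0 + \sum_(i < K) Phi ^+ i *m Psi *m U (K.-1 - i)%N.
Proof.
elim: K => [|K IH] /=; first by rewrite expr0 mul1mx big_ord0 addr0.
rewrite IH mulmxDr mulmxA mxexpS big_ord_recl /= expr0 mul1mx subn0.
rewrite -addrA; congr (_ + _); rewrite addrC; congr (_ + _).
rewrite mulmx_sumr; apply: eq_bigr => i _.
rewrite !mulmxA mxexpS; congr (_ *m U _).
by rewrite /bump /= add1n -subn1 -subnDA add1n.
Qed.


Lemma cmxE (R : rcfType) m n (M : 'M[R]_(m,n)) : cmx M = map_mx (real_complex R) M.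
Proof. by []. Qed.

Lemma cmx_exp (R : rcfType) d (P : 'M[R]_d) k : cmx (P ^+ k) = cmx P ^+ k.
Proof.
elim: k => [|k IH]; first by rewrite !expr0; exact: map_mx1.
by rewrite !exprS -IH cmxE; exact: map_mxM.
Qed.



Lemma ctrb_of_pbh (R : rcfType) d r (P : 'M[R]_d) (Q : 'M[R]_(d,r)) :
  (forall (a : R[i]) (z : 'rV[R[i]]_d), z *m cmx P = a *: z -> z *m cmx Q = 0 -> z = 0) ->
  ctrb_system P Q.
Proof.
case: d P Q => [|d] P Q Hpbh X0.
  by exists 0%N, (fun _ => 0); rewrite /= flatmx0.
pose D := degree_mxminpoly P.
pose B_ := fun i : 'I_D => (<<(P ^+ i *m Q)^T>>)%MS.
pose Rch := (\sum_(i < D) B_ i)%MS.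
have Hspan : forall k, exists c : 'I_D -> R, P ^+ k = \sum_(i < D) c i *: P ^+ i.
  move=> k; have := horner_mx_mem P ('X^k).
  rewrite rmorphXn /= horner_mx_X => /submxP [u Hu].
  exists (fun i => u 0 i); apply: (can_inj (@mxvecK _ _ _)).
  rewrite Hu linear_sum /= mulmx_sum_row; apply: eq_bigr => i _.
  by rewrite rowK linearZ.
have Hfull : row_full Rch.
  case: (boolP (row_full Rch)) => // Hnf; exfalso.
  have Hk : kermx Rch^T != 0.
    rewrite -mxrank_eq0 mxrank_ker mxrank_tr subn_eq0 -ltnNge.
    by rewrite ltn_neqAle Hnf rank_leq_col.
  have [j Hj] : exists j, row j (kermx Rch^T) != 0.
    case: (pickP (fun j => row j (kermx Rch^T) != 0)) => [j Hj|H0]; first by exists j.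
    exfalso; move/eqP: Hk; apply; apply/row_matrixP => j; rewrite row0.
    by move: (H0 j) => /= /negbFE/eqP.
  set y := row j _ in Hj.
  have Hy0 : y *m Rch^T = 0 by rewrite /y -row_mul mulmx_ker row0.
  have HyD : forall i : 'I_D, y *m P ^+ i *m Q = 0.
    move=> i; have : ((P ^+ i *m Q)^T <= Rch)%MS.
      by apply: (sumsmx_sup i) => //; rewrite /B_ genmxE.
    case/submxP => X HX; rewrite -mulmxA.
    have -> : P ^+ i *m Q = Rch^T *m X^T by rewrite -trmx_mul -HX trmxK.
    by rewrite mulmxA Hy0 mul0mx.
  have Hyk : forall k, y *m P ^+ k *m Q = 0.
    move=> k; have [c ->] := Hspan k.
    rewrite mulmx_sumr mulmx_suml big1 // => i _.
    by rewrite -scalemxAr -scalemxAl HyD scaler0.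
  have Hcy : cmx y != 0 by rewrite cmxE map_mx_eq0.
  have [|a [z [nz Hz1 Hz2]]] := @eig_exists _ _ _ (cmx P) (cmx Q) _ Hcy.
    move=> k; by rewrite -cmx_exp !cmxE -!map_mxM Hyk map_mx0.
  by move/eqP: nz; apply; apply: Hpbh Hz1 Hz2.
have Hx : ((- (P ^+ D *m X0))^T <= Rch)%MS by apply: submx_full.
case/sub_sumsmxP: Hx => u Hu.
pose w := fun i : 'I_D => u i *m (B_ i *m pinvmx (P ^+ i *m Q)^T).
have Hw : - (P ^+ D *m X0) = \sum_(i < D) P ^+ i *m Q *m (w i)^T.
  apply: trmx_inj; rewrite Hu linear_sum /=; apply: eq_bigr => i _.
  by rewrite /w trmx_mul trmxK -mulmxA mulmxKpV // /B_ genmxE.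
exists D, (fun k => if insub (D.-1 - k)%N is Some i then (w i)^T else 0).
rewrite traj_closed.
have -> : \sum_(i < D) P ^+ i *m Q *m
     (if insub (D.-1 - (D.-1 - i))%N is Some i0 then (w i0)^T else 0)
   = \sum_(i < D) P ^+ i *m Q *m (w i)^T.
  apply: eq_bigr => i _.
  have -> : (D.-1 - (D.-1 - i) = i)%N by have := ltn_ord i; lia.
  by rewrite valK.
by rewrite -Hw addrN.
Qed.

Definition liftr (F : pzRingType) d (x : 'rV[F]_d) : 'M[F]_((1*1)%N, d) :=
  \matrix_(i, j) x 0 j.

Lemma liftrM (F : pzRingType) d e (x : 'rV[F]_d) (M : 'M[F]_(d, e)) :
  liftr (x *m M) = liftr x *m M.
Proof. by apply/matrixP => i j; rewrite !mxE; apply: eq_bigr => k _; rewrite mxE. Qed.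

Lemma liftrZ (F : pzRingType) d c (x : 'rV[F]_d) : liftr (c *: x) = c *: liftr x.
Proof. by apply/matrixP => i j; rewrite !mxE. Qed.

Lemma liftr0 (F : pzRingType) d : liftr (0 : 'rV[F]_d) = 0.
Proof. by apply/matrixP => i j; rewrite !mxE. Qed.

Lemma liftr_inj (F : pzRingType) d (x : 'rV[F]_d) : liftr x = 0 -> x = 0.
Proof.
move=> H; apply/matrixP => i j; rewrite (ord1 i).
have := congr1 (fun M : 'M[F]_((1*1)%N, d) => M (mxtens_index (ord0, ord0)) j) H.
by rewrite /= !mxE.
Qed.

Lemma tens11 (F : pzRingType) N n :
  (1%:M : 'M[F]_N) *t (1%:M : 'M[F]_n) = 1%:M.
Proof.
apply/matrixP => i j.
case: (mxtens_indexP i) => i0 i1; case: (mxtens_indexP j) => j0 j1.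
rewrite tensmxE !mxE (can_eq (@mxtens_indexK _ _)) xpair_eqE.
by case: (i0 == j0); case: (i1 == j1); rewrite /= ?mulr1 ?mul1r ?mulr0 ?mul0r.
Qed.

Unset Implicit Arguments.
Set Strict Implicit.

Theorem theorem2 (R : realType) (N n m p : nat)
  (A : 'M[R]_n) (B : 'M[R]_(n, p)) (C : 'M[R]_(m, n)) (H : 'M[R]_(n, m))
  (W : 'M[R]_N) (delta : 'I_N -> bool) (h : R)
  (v : 'M[R[i]]_N) (lambda : 'I_N -> R[i]) :
  (0 < N)%N -> (0 < n)%N -> (0 < m)%N -> (0 < p)%N ->
  (forall i : 'I_N, W i i = 0) ->
  0 < h ->
  v \in unitmx ->
  (forall k : 'I_N, row k v *m cmx W = lambda k *: row k v) ->
  let Bh := int_expm A h *m B in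
  let Hh := int_expm A h *m (H *m C) in
  let Phi_s := (1%:M : 'M[R]_N) *t expm A h + W *t Hh in
  let Psi_s := (diag01 R delta) *t Bh in
  let E := fun k : 'I_N => cmx (expm A h) + lambda k *: cmx Hh in
  ctrb_pair (cmx W) (cmx (diag01 R delta)) ->
  (forall k : 'I_N, ctrb_pair (E k) (cmx Bh)) ->
  (forall (theta : R[i]) (S : {set 'I_N}),
      (1 < #|S|)%N ->
      (forall k, k \in S -> eigenvalue (E k) theta) ->
      forall xi : 'I_N -> 'rV[R[i]]_n,
        (forall k, k \in S -> left_eigsp theta (E k) (xi k)) ->
        (exists2 k, k \in S & xi k != 0) ->
        (\sum_(k in S) (row k v *t xi k)) *m cmx Psi_s != 0) ->
  ctrb_system Phi_s Psi_s.
Proof.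
move=> N0 n0 m0 p0 Wd h0 Uv Hv Bh Hh Phi_s Psi_s E H1 H2 H3.
apply: ctrb_of_pbh => a z Hz HzPsi.
have cPhi : cmx Phi_s = (1%:M : 'M[R[i]]_N) *t cmx (expm A h) + cmx W *t cmx Hh.
  by rewrite /Phi_s !cmxE map_mxD !map_mxT map_mx1.
have cPsi : cmx Psi_s = cmx (diag01 R delta) *t cmx Bh.
  by rewrite /Psi_s !cmxE map_mxT.
pose w := z *m (invmx v *t (1%:M : 'M[R[i]]_n)).
pose xi := fun k : 'I_N => \row_j w 0 (mxtens_index (k, j)) : 'rV[R[i]]_n.
have Hdec : liftr z = \sum_k row k v *t xi k.
  have Lw : liftr w = \sum_k (delta_mx 0 k : 'rV[R[i]]_N) *t xi k.
    apply/matrixP => i c; case: (mxtens_indexP c) => k j.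
    by rewrite tens_entry !mxE.
  have -> : z = w *m (v *t (1%:M : 'M[R[i]]_n)).
    by rewrite /w -mulmxA tensmx_mul mulVmx // mulmx1 tens11 mulmx1.
  rewrite liftrM Lw mulmx_suml; apply: eq_bigr => k _.
  by rewrite tensmx_mul -rowE mulmx1.
have Heig : forall k, xi k *m E k = a *: xi k.
  have : \sum_k row k v *t (xi k *m E k - a *: xi k) = 0.
    have HH := congr1 (@liftr _ _) Hz; rewrite liftrM liftrZ in HH.
    rewrite (eq_bigr (fun k => (row k v *t xi k) *m cmx Phi_s - a *: (row k v *t xi k))); last first.
      move=> k _; rewrite cPhi.
      rewrite [in RHS]mulmxDr !tensmx_mul mulmx1 Hv tensmxZl.
      by rewrite tensmxBr /E mulmxDr tensmxDr -scalemxAr !tensmxZr.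
    by rewrite sumrB -mulmx_suml -scaler_sumr -Hdec HH subrr.
  move/(tens_inj Uv) => HH k; apply/eqP; rewrite -subr_eq0; exact/eqP/HH.
have HPsi : liftr z *m cmx Psi_s = 0 by rewrite -liftrM HzPsi liftr0.
apply/eqP; apply/negPn/negP => nz.
have [k0 Hk0] : exists k, xi k != 0.
  case: (pickP (fun k => xi k != 0)) => [k Hk|H0]; first by exists k.
  exfalso; move/eqP: nz; apply; apply: liftr_inj; rewrite Hdec big1 // => k _.
  by move: (H0 k) => /= /negbFE/eqP ->; rewrite tensmx0.
pose S := [set k | xi k != 0].
have HS0 : forall k, k \notin S -> xi k = 0.
  by move=> k; rewrite inE negbK => /eqP.
have HsumS : \sum_(k in S) (row k v *t xi k) = liftr z.
  rewrite Hdec big_mkcond /=; apply: eq_bigr => k _.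
  by case: ifP => // /negbT /HS0 ->; rewrite tensmx0.
case: (ltnP 1 #|S|) => HS.
  have Heigv : forall k, k \in S -> eigenvalue (E k) a.
    move=> k Hk; apply/eigenvalueP; exists (xi k); first exact: Heig.
    by rewrite inE in Hk.
  have Hex : exists2 k, k \in S & xi k != 0 by exists k0; rewrite ?inE.
  by move: (H3 a S HS Heigv xi (fun k _ => Heig k) Hex); rewrite HsumS HPsi eqxx.
have /cards1P [k1 HS1] : #|S| == 1%N.
  by rewrite eqn_leq HS card_gt0; apply/set0Pn; exists k0; rewrite inE.
have : (row k1 v *m cmx (diag01 R delta)) *t (xi k1 *m cmx Bh) = 0.
  by rewrite -HPsi -HsumS HS1 big_set1 cPsi tensmx_mul.
case/tensmx_eq0 => Hc.
  have Hr := pbh_easy H1 (Hv k1) Hc.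
  have Hf : row_free v by rewrite row_free_unit.
  move: Hr; rewrite rowE => /eqP; rewrite mulmx_free_eq0 // => /eqP/matrixP/(_ 0 k1).
  by rewrite !mxE !eqxx => /eqP; rewrite oner_eq0.
have Hr := pbh_easy (H2 k1) (Heig k1) Hc.
have : k1 \in S by rewrite HS1 set11.
by rewrite inE Hr eqxx.
Qed.
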